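(* Let $m\ge 1$ be an integer and $y=(y_0,\dots,y_{2m})\in\mathbb{R}^{2m+1}_+$. Then the function $$\mathcal{I}(x)=\mathcal{I}(y\,\|\,x*x)=\sum_{i=0}^{2m}\Big(y_i\log\frac{y_i}{(x*x)_i}-y_i+(x*x)_i\Big)$$ attains its minimum over $x\in\mathbb{R}^{m+1}_+$; i.e. the problem of minimizing $\mathcal{I}(y\|x*x)$ over $x\in\mathbb{R}^{m+1}_+$ admits a solution.
   Context: For $x=(x_0,\dots,x_m)\in\mathbb{R}^{m+1}$ set $x_k=0$ for $k<0$ and $k>m$, and define the autoconvolution $(x*x)_i=\sum_{j=0}^{i}x_{i-j}x_j$ for $i=0,\dots,2m$. For nonnegative vectors $u,v$ of equal length, the I-divergence is $\mathcal{I}(u\|v)=\sum_i\big(u_i\log\frac{u_i}{v_i}-u_i+v_i\big)$ if $u_i=0$ whenever $v_i=0$ (with the convention $0\log 0=0$, $0\log(0/0)=0$), and $\mathcal{I}(u\|v)=\infty$ if some $u_i>0$ has $v_i=0$. *)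

(* Defs.v *)
From HB Require Import structures.
From mathcomp Require Import all_boot all_order all_algebra.
From mathcomp Require Import all_classical all_reals.
From mathcomp Require Import ereal exp.
Set Implicit Arguments. Unset Strict Implicit. Unset Printing Implicit Defensive.
Import Order.TTheory GRing.Theory Num.Theory.
Local Open Scope ring_scope.

Definition ext (R : realType) (m : nat) (x : 'I_m.+1 -> R) (k : nat) : R :=
  if (k < m.+1)%N then x (inord k) else 0.

Definition autoconv (R : realType) (m : nat) (x : 'I_m.+1 -> R)
  : 'I_(2 * m).+1 -> R :=
  fun i => \sum_(j < (nat_of_ord i).+1) ext x (i - j) * ext x j.

(* one summand  u log(u/v) - u + v,  with 0 log 0 = 0 log(0/0) = 0 *)
Definition idiv_term (R : realType) (u v : R) : R :=
  (if u == 0 then 0 else u * ln (u / v)) - u + v.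

Definition idiv (R : realType) (n : nat) (u v : 'I_n -> R) : \bar R :=
  if [forall i, (v i == 0) ==> (u i == 0)]
  then (\sum_(i < n) idiv_term (u i) (v i))%:E
  else +oo%E.

(* Main.v *)
Require Import Defs.
From HB Require Import structures.
From mathcomp Require Import all_boot all_order all_algebra.
From mathcomp Require Import all_classical all_reals.
From mathcomp Require Import ereal exp.
From mathcomp Require Import topology normedtype sequences derive matrix_normedtype.
From mathcomp Require Import ring lra zify.
Import Order.TTheory GRing.Theory Num.Theory.
Import numFieldNormedType.Exports.
Local Open Scope ring_scope.
Local Open Scope classical_set_scope.

Section S.
Variable R : realType.

Lemma sum_cont (T : topologicalType) n (f : 'I_n -> T -> R) :
  (forall i, continuous (f i)) -> continuous (fun x => \sum_(i < n) f i x).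
Proof.
elim: n f => [|n IH] f fc.
  under eq_fun do rewrite big_ord0. exact: cst_continuous.
under eq_fun do rewrite big_ord_recr /=.
move=> x; apply: continuousD; last exact: fc.
exact: (IH (fun i => f (widen_ord (leqnSn n) i))).
Qed.

Lemma ext_cont m k : continuous (fun r : 'rV[R]_m.+1 => ext (fun j => r ord0 j) k).
Proof.
rewrite /ext; case: (k < m.+1)%N; last exact: cst_continuous.
exact: coord_continuous.
Qed.

Lemma conv_cont m i : continuous (fun r : 'rV[R]_m.+1 => autoconv (fun j => r ord0 j) i).
Proof.
rewrite /autoconv. apply: sum_cont => j x; exact: continuousM (ext_cont m (i - j) x) (ext_cont m j x).
Qed.

Definition h (u d t : R) := if u == 0 then t else u * ln (u / Num.max t d) - u + t.

Lemma h_cont (u d : R) : 0 <= u -> 0 < d -> continuous (h u d).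
Proof.
move=> u0' d0; rewrite /h; have [u00|u0] := eqVneq u 0; first by move=> x /=; exact: cvg_id.

have up : 0 < u by rewrite lt_def u0.
move=> x.
have hp : 0 < Num.max x d by rewrite lt_max d0 orbT.
have c1 : {for x, continuous (fun t : R => Num.max t d)}.
  have := @continuous_max R R id (fun=> d) x.
  move=> H; apply: H; [exact: cvg_id | exact: cst_continuous].
have c2 : {for x, continuous (fun t : R => (Num.max t d)^-1)}.
  by apply: continuousV c1; rewrite gt_eqF.
have c3 : {for x, continuous (fun t : R => u * (Num.max t d)^-1)}.
  exact: continuousM (@cst_continuous R R u x) c2.
have c4 : {for x, continuous (fun t : R => ln (u * (Num.max t d)^-1))}.
  apply: (continuous_comp (f := fun t : R => u * (Num.max t d)^-1)) => //.
  by apply: continuous_ln; rewrite mulr_gt0 // invr_gt0.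
have c5 : {for x, continuous (fun t : R => u * ln (u * (Num.max t d)^-1))}.
  exact: continuousM (@cst_continuous R R u x) c4.
have c6 : {for x, continuous (fun t : R => u * ln (u * (Num.max t d)^-1) - u)}.
  exact: continuousB c5 (@cst_continuous R R u x).
have cid : {for x, continuous (fun t : R => t)} by exact: cvg_id.
exact: continuousD c6 cid.
Qed.

Lemma ln_le_sub1 {z : R} : 0 < z -> ln z <= z - 1.
Proof. move=> z0; have := expR_ge1Dx (ln z); rewrite lnK ?posrE //; lra. Qed.

Lemma ln_inv_div (u v : R) : 0 < u -> 0 < v -> ln (u / v) = - ln (v / u).
Proof. by move=> u0 v0; rewrite -lnV ?posrE ?divr_gt0 // invf_div. Qed.

Lemma L1 (u v : R) : 0 <= u -> 0 <= v -> (v = 0 -> u = 0) -> 0 <= idiv_term u v.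
Proof.
move=> u0 v0 c; rewrite /idiv_term; have [->|un0] := eqVneq u 0; first lra.
have up : 0 < u by rewrite lt_def un0.
have vp : 0 < v by rewrite lt_def v0 andbT; apply/eqP => /c /eqP; rewrite (negbTE un0).
rewrite ln_inv_div //.
have h1 := ln_le_sub1 (divr_gt0 vp up).
have h2 : u * ln (v / u) <= u * (v / u - 1) by rewrite ler_wpM2l // ltW.
have h3 : u * (v / u - 1) = v - u by field; rewrite gt_eqF.
lra.
Qed.

Lemma L2 (u v : R) : 0 <= u -> 0 <= v -> (v = 0 -> u = 0) -> v / 2 - u <= idiv_term u v.
Proof.
move=> u0 v0 c; rewrite /idiv_term; have [->|un0] := eqVneq u 0; first lra.
have up : 0 < u by rewrite lt_def un0.
have vp : 0 < v by rewrite lt_def v0 andbT; apply/eqP => /c /eqP; rewrite (negbTE un0).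
rewrite ln_inv_div //.
have e : v / u = 2 * (v / (2 * u)) by field; rewrite ?gt_eqF.
have l2 : ln (2 : R) <= 1 by have := ln_le_sub1 (ltr0Sn R 1); lra.
have h1 := ln_le_sub1 (divr_gt0 vp (mulr_gt0 (ltr0Sn R 1) up)).
have h0 : ln (v / u) <= v / (2 * u).
  rewrite e lnM ?posrE ?divr_gt0 ?mulr_gt0 //; lra.
have h2 : u * ln (v / u) <= u * (v / (2 * u)) by rewrite ler_wpM2l // ltW.
have h3 : u * (v / (2 * u)) = v / 2 by field; rewrite gt_eqF.
lra.
Qed.

Lemma L3 (C u v : R) : 0 < u -> 0 < v -> v < u * expR (- ((C + u) / u)) -> C < idiv_term u v.
Proof.
move=> up vp hv; rewrite /idiv_term gt_eqF //.
set a := (C + u) / u.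
have ea : 0 < expR a := expR_gt0 a.
have h1 : expR a * v < u.
  move: hv; rewrite expRN => hv.
  have := ltr_pM2l ea; move=> /(_ v (u * (expR a)^-1)); rewrite hv => /esym H.
  by move: H; rewrite mulrCA divff ?gt_eqF // mulr1.
have h2 : expR a < u / v by rewrite ltr_pdivlMr.
have h3 : a < ln (u / v).
  by rewrite -[a in a < _]expRK ltr_ln ?posrE ?expR_gt0 ?divr_gt0.
have h4 : u * a < u * ln (u / v) by rewrite ltr_pM2l.
have h5 : u * a = C + u by rewrite /a; field; rewrite gt_eqF.
lra.
Qed.

Lemma ext_ge0 m (x : 'I_m.+1 -> R) k : (forall j, 0 <= x j) -> 0 <= ext x k.
Proof. by move=> x0; rewrite /ext; case: ifP. Qed.

Lemma conv_ge0 m (x : 'I_m.+1 -> R) i : (forall j, 0 <= x j) -> 0 <= autoconv x i.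
Proof. by move=> x0; rewrite /autoconv; apply: sumr_ge0 => k _; rewrite mulr_ge0 // ext_ge0. Qed.

Lemma le_sum_term n (F : 'I_n -> R) i : (forall k, 0 <= F k) -> F i <= \sum_k F k.
Proof. by move=> F0; rewrite (bigD1 i) //= lerDl sumr_ge0. Qed.

Lemma conv_diag m (x : 'I_m.+1 -> R) (j : 'I_m.+1) : (forall j, 0 <= x j) ->
  x j * x j <= autoconv x (inord (2 * j)).
Proof.
move=> x0; rewrite /autoconv.
have hj : (2 * j < (2 * m).+1)%N by have := ltn_ord j; lia.
rewrite inordK //.
have hk : (j < (2 * j).+1)%N by lia.
pose k0 : 'I_(2 * j).+1 := Ordinal hk.
apply: le_trans (@le_sum_term _ (fun k : 'I_(2 * j).+1 => ext x (2 * j - k) * ext x k) k0 _).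
  have -> : (2 * j - k0 = j)%N by rewrite /=; lia.
  by rewrite /ext /= ltn_ord inord_val.
by move=> k; rewrite mulr_ge0 // ext_ge0.
Qed.

Lemma conv_one m (i : 'I_(2 * m).+1) : 1 <= autoconv (fun _ : 'I_m.+1 => 1 : R) i.
Proof.
rewrite /autoconv.
have hk : (minn i m < i.+1)%N by lia.
pose k0 : 'I_i.+1 := Ordinal hk.
apply: le_trans (@le_sum_term _ (fun k : 'I_i.+1 => ext (fun _ : 'I_m.+1 => 1 : R) (i - k) * ext (fun _ => 1) k) k0 _).
  have h1 : (i - minn i m < m.+1)%N by have := ltn_ord i; lia.
  have h2 : (minn i m < m.+1)%N by lia.
  by rewrite /ext /= h1 h2 mulr1.
by move=> k; rewrite mulr_ge0 // ext_ge0.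
Qed.

Lemma Tge (n : nat) (y v : 'I_n -> R) : (forall i, 0 <= y i) -> (forall i, 0 <= v i) ->
  (forall i, v i = 0 -> y i = 0) ->
  forall i, idiv_term (y i) (v i) <= \sum_k idiv_term (y k) (v k).
Proof.
move=> y0 v0 c i; apply: (@le_sum_term _ (fun k => idiv_term (y k) (v k))) => k.
exact: L1 (y0 k) (v0 k) (c k).
Qed.
End S.
Arguments conv_one {R m} i.
Arguments conv_ge0 {R m x} i.
Arguments conv_diag {R m x} j.
Arguments L1 {R u v}.
Arguments L2 {R u v}.
Arguments L3 {R C u v}.
Arguments le_sum_term {R n}.
Arguments sum_cont {R T n}.
Arguments conv_cont {R m}.
Arguments Tge {R n y v}.
Arguments h {R}.

Theorem proposition1 (R : realType) (m : nat) (hm : (1 <= m)%N)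
  (y : 'I_(2 * m).+1 -> R) (hy : forall i, 0 <= y i) :
  exists2 x : 'I_m.+1 -> R, (forall j, 0 <= x j) &
    forall x' : 'I_m.+1 -> R, (forall j, 0 <= x' j) ->
      (idiv y (autoconv x) <= idiv y (autoconv x'))%E.
Proof.
pose X := fun (r : 'rV[R]_m.+1) (j : 'I_m.+1) => r ord0 j.
pose T := fun x : 'I_m.+1 -> R => \sum_i idiv_term (y i) (autoconv x i).
pose x0 := fun _ : 'I_m.+1 => 1 : R.
pose C := T x0.
pose Y := \sum_i y i.
have C0 : 0 <= C.
  apply: sumr_ge0 => i _; apply: L1 => //.
    exact: le_trans ler01 (conv_one i).
  move=> h0; have H1 : 1 <= autoconv x0 i := conv_one i.
  by rewrite h0 in H1; lra.
have yY : forall i, y i <= Y by move=> i; exact: (le_sum_term y i hy).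
have Y0 : 0 <= Y by apply: sumr_ge0.
pose B := C + Y + 2.
pose dlt := fun i => if y i == 0 then 1 else Num.min 1 (y i * expR (- ((C + y i) / y i))).
have dlt0 : forall i, 0 < dlt i.
  move=> i; rewrite /dlt; have [//|yi] := eqVneq (y i) 0.
  by rewrite lt_min ltr01 mulr_gt0 ?expR_gt0 // lt_def yi hy.
have dlt1 : forall i, dlt i <= 1.
  by move=> i; rewrite /dlt; case: (y i == 0) => //; rewrite ge_min lexx.
have dlt2 : forall i, y i != 0 -> dlt i <= y i * expR (- ((C + y i) / y i)).
  by move=> i yi; rewrite /dlt (negbTE yi) ge_min lexx orbT.
pose V := fun r i => autoconv (X r) i.
pose box := [set r : 'rV[R]_m.+1 | forall j, `[0, B]%classic (r ord0 j)].
pose K1 := \bigcap_(i in [set i | y i != 0]) ((fun r => V r i) @^-1` [set t | dlt i <= t]).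
pose A := box `&` K1.
have cA : compact A.
  apply: compact_closedI.
    exact: (@rV_compact _ _ (fun=> `[0, B]%classic) (fun _ => @segment_compact _ 0 B)).
  apply: closed_bigI => i _; apply: preimage_closed; last exact: closed_ge.
  by move=> r _; exact: conv_cont.
pose G := fun r => \sum_i h (y i) (dlt i) (V r i).
have cG : continuous G.
  apply: (sum_cont (fun i r => h (y i) (dlt i) (V r i))) => i r.
  apply: continuous_comp; first exact: conv_cont.
  exact: h_cont.
have GT : forall r, K1 r -> G r = T (X r).
  move=> r Kr; apply: eq_bigr => i _; rewrite /h /idiv_term.
  have [yi|yi] := eqVneq (y i) 0; first by rewrite yi subr0 add0r.
  by rewrite max_l //; exact: (Kr i yi).
have X0 : X (\row_j (1:R)) = x0 by apply: funext => j; rewrite /X mxE.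
have A1 : A (\row_j (1:R)).
  split.
    by move=> j; rewrite /= mxE in_itv /= ler01 /B; lra.
  by move=> i _; rewrite /= /V X0; exact: le_trans (dlt1 i) (conv_one i).
have cGA : {within A, continuous G} by apply: continuous_subspaceT.
have [c Ac minc] := @EVT_min_rV R m.+1 G A (ex_intro _ _ A1) cA cGA.
rewrite in_setE in Ac.
have GcC : G c <= C.
  have H := minc _ (mem_set A1); rewrite (GT _ A1.2) X0 in H; exact: H.
exists (X c).
  by move=> j; case: Ac => bx _; have := bx j; rewrite /= in_itv /= => /andP[].
move=> x' x'0.
have Tc : T (X c) = G c by rewrite GT //; case: Ac.
have condc : [forall i, (autoconv (X c) i == 0) ==> (y i == 0)].
  apply/forallP => i; apply/implyP => /eqP V0; apply/negPn/negP => yi.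
  case: Ac => _ Kc; have := Kc i yi; rewrite /= /V V0 => H.
  by have := dlt0 i; lra.
rewrite /idiv condc; case: ifP => cond'; last by rewrite leey.
rewrite lee_fin -/(T (X c)) -/(T x') Tc.
have cnd : forall i, autoconv x' i = 0 -> y i = 0.
  by move=> i V0; move/forallP: cond' => /(_ i) /implyP; rewrite V0 eqxx => /(_ isT) /eqP.
have Tg := Tge hy (fun i => conv_ge0 i x'0) cnd.
pose r' := \row_j x' j.
have Xr : X r' = x' by apply: funext => j; rewrite /X mxE.
case: (boolP [forall j, x' j <= B]) => hb; last first.
  move: hb; rewrite negb_forall => /existsP [j]; rewrite -ltNge => hj.
  pose i := (inord (2 * j) : 'I_(2 * m).+1).
  have h1 : x' j * x' j <= autoconv x' i := conv_diag j x'0.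
  have eB : B = C + Y + 2 by [].
  have h2 := L2 (hy i) (conv_ge0 i x'0) (cnd i).
  have h3 := Tg i.
  have h4 := yY i.
  have hj0 : 0 <= B by rewrite /B; lra.
  have h5 : B * B <= x' j * x' j by rewrite ler_pM // ltW.
  rewrite -/(T x') in h3.
  have h6 : B * B >= 2 * B by rewrite ler_pM2r /B; lra.
  lra.
case: (boolP [forall i, (y i != 0) ==> (dlt i <= autoconv x' i)]) => hk.
  have Ar : A r'.
    split.
      move=> j; rewrite /= mxE in_itv /= x'0 /=.
      by move/forallP: hb => /(_ j).
    move=> i yi; rewrite /= /V Xr.
    by move/forallP: hk => /(_ i) /implyP /(_ yi).
  have H := minc _ (mem_set Ar); rewrite (GT _ Ar.2) Xr in H; exact: H.
move: hk; rewrite negb_forall => /existsP [i]; rewrite negb_imply => /andP [yi]; rewrite -ltNge => hv.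
have vp : 0 < autoconv x' i.
  rewrite lt_def conv_ge0 // andbT; apply/eqP => /cnd /eqP; by rewrite (negbTE yi).
have yp : 0 < y i by rewrite lt_def yi hy.
have h1 : C < idiv_term (y i) (autoconv x' i) := L3 yp vp (lt_le_trans hv (dlt2 i yi)).
have h2 := Tg i.
rewrite -/(T x') in h2.
lra.
Qed.
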